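(* Let $\Omega\subset\mathbb{R}^n$ be open and let $L$ be the operator $$L=\Delta_x+\Delta_y+2\sum_i\frac{\partial^2}{\partial x_i\partial y_i}-4\sum_{i,j}X_iX_j\frac{\partial^2}{\partial x_i\partial y_j}$$ on $\{(x,y)\in\Omega\times\Omega:x\ne y\}$, where $X=|y-x|$ and $X_i=(y_i-x_i)/X$. Then for every smooth function $v$ on $\Omega$, with $\tilde X=(X_1,\dots,X_n)=\frac{y-x}{|y-x|}$, $$L\Big\{\big[\nabla v(y)-\nabla v(x)\big]\cdot\tilde X\Big\}=\big[\nabla\Delta v(y)-\nabla\Delta v(x)\big]\cdot\tilde X.$$ *)

(* Defs.v *)
From Stdlib Require Import Reals Classical ClassicalEpsilon.
From mathcomp Require Import ssreflect ssrbool eqtype ssrnat fintype bigop.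

Open Scope R_scope.

Definition Rn (n : nat) := 'I_n -> R.

Definition upd {n} (x : Rn n) (i : 'I_n) (t : R) : Rn n :=
  fun j => if j == i then t else x j.

Definition sumI (n : nat) (F : 'I_n -> R) : R := \big[Rplus/R0]_(i < n) F i.

(* The i-th partial derivative of F at x (the derivative of the one-variable
   restriction t |-> F(x with x_i := t) at t = x_i); chosen by Hilbert's
   epsilon, so it is the partial derivative whenever the latter exists. *)
Definition pd {n} (i : 'I_n) (F : Rn n -> R) (x : Rn n) : R :=
  epsilon (inhabits R0)
    (fun l => derivable_pt_lim (fun t => F (upd x i t)) (x i) l).

Definition has_pd {n} (i : 'I_n) (F : Rn n -> R) (x : Rn n) : Prop :=
  exists l, derivable_pt_lim (fun t => F (upd x i t)) (x i) l.

Fixpoint pdl {n} (ks : list 'I_n) (F : Rn n -> R) : Rn n -> R :=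
  match ks with
  | nil => F
  | cons k ks' => pd k (pdl ks' F)
  end.

(* Continuity at x on R^n (sup-norm, equivalent to Euclidean). *)
Definition cont_at {n} (F : Rn n -> R) (x : Rn n) : Prop :=
  forall eps, 0 < eps -> exists del, 0 < del /\
    forall y : Rn n, (forall i, Rabs (y i - x i) < del) -> Rabs (F y - F x) < eps.

Definition openRn {n} (O : Rn n -> Prop) : Prop :=
  forall x, O x -> exists e, 0 < e /\
    forall y : Rn n, (forall i, Rabs (y i - x i) < e) -> O y.

Definition smooth_on {n} (O : Rn n -> Prop) (v : Rn n -> R) : Prop :=
  forall (ks : list 'I_n) (x : Rn n), O x ->
    cont_at (pdl ks v) x /\ forall i, has_pd i (pdl ks v) x.

Definition lap {n} (v : Rn n -> R) : Rn n -> R :=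
  fun x => sumI n (fun i => pd i (pd i v) x).

Definition dx {n} (i : 'I_n) (W : Rn n -> Rn n -> R) : Rn n -> Rn n -> R :=
  fun x y => pd i (fun x' => W x' y) x.
Definition dy {n} (j : 'I_n) (W : Rn n -> Rn n -> R) : Rn n -> Rn n -> R :=
  fun x y => pd j (W x) y.

Definition Xn {n} (x y : Rn n) : R := sqrt (sumI n (fun i => (y i - x i) ^ 2)).
Definition Xc {n} (i : 'I_n) (x y : Rn n) : R := (y i - x i) / Xn x y.

Definition Lop {n} (W : Rn n -> Rn n -> R) (x y : Rn n) : R :=
  sumI n (fun i => dx i (dx i W) x y)
  + sumI n (fun i => dy i (dy i W) x y)
  + 2 * sumI n (fun i => dx i (dy i W) x y)
  - 4 * sumI n (fun i => sumI n (fun j => Xc i x y * Xc j x y * dx i (dy j W) x y)).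

Definition grad_diff_dot {n} (u : Rn n -> R) : Rn n -> Rn n -> R :=
  fun x y => sumI n (fun i => (pd i u y - pd i u x) * Xc i x y).

(* Main.v *)
Require Import Defs.
From HB Require Import structures.
From Stdlib Require Import Reals Classical ClassicalEpsilon FunctionalExtensionality PropExtensionality Lra.
From mathcomp Require Import ssreflect ssrbool eqtype ssrnat seq fintype bigop.
Open Scope R_scope.

Lemma Rplus_assoc' : ssrfun.associative Rplus. Proof. by move=> *; rewrite Rplus_assoc. Qed.
HB.instance Definition _ := Monoid.isComLaw.Build R R0 Rplus Rplus_assoc' Rplus_comm Rplus_0_l.

Definition del {n} (i j : 'I_n) : R := if i == j then 1 else 0.

Section Sums.
Variable n : nat.
Implicit Types F G : 'I_n -> R.

Lemma sumI_ext F G : (forall i, F i = G i) -> sumI n F = sumI n G.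
Proof. by move=> h; rewrite /sumI; apply: eq_bigr => i _; apply: h. Qed.

Lemma sumI_add F G : sumI n (fun i => F i + G i) = sumI n F + sumI n G.
Proof. by rewrite /sumI big_split. Qed.

Lemma sumI_scal c F : c * sumI n F = sumI n (fun i => c * F i).
Proof.
rewrite /sumI; elim/big_rec2: _ => [|i y1 y2 _ <-]; first by rewrite Rmult_0_r.
by rewrite Rmult_plus_distr_l.
Qed.

Lemma sumI_opp F : - sumI n F = sumI n (fun i => - F i).
Proof.
rewrite /sumI; elim/big_rec2: _ => [|i y1 y2 _ <-]; first by rewrite Ropp_0.
by rewrite Ropp_plus_distr.
Qed.

Lemma sumI_swap (H : 'I_n -> 'I_n -> R) :
  sumI n (fun i => sumI n (fun j => H i j)) = sumI n (fun j => sumI n (fun i => H i j)).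
Proof. by rewrite /sumI exchange_big. Qed.


Lemma sumI_del i F : sumI n (fun j => del i j * F j) = F i.
Proof.
rewrite /sumI (bigD1 i) //= /del eqxx big1 ?Rplus_0_r ?Rmult_1_l //.
by move=> j; rewrite eq_sym => /negbTE ->; rewrite Rmult_0_l.
Qed.

Lemma sumI_del' i F : sumI n (fun j => F j * del j i) = F i.
Proof.
rewrite -(sumI_del i F); apply: sumI_ext => j; rewrite /del eq_sym; ring.
Qed.

Lemma sumI_nonneg F : (forall i, 0 <= F i) -> 0 <= sumI n F.
Proof.
move=> h; rewrite /sumI; elim/big_ind: _ => //; first lra.
by move=> a b ha hb; lra.
Qed.

Lemma sumI_ge_term F i : (forall i, 0 <= F i) -> F i <= sumI n F.
Proof.
move=> h; rewrite /sumI (bigD1 i) //=.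
set s := (X in _ + X).
have : 0 <= s.
  by rewrite /s; elim/big_ind: _ => //; [lra| move=> a b; lra].
lra.
Qed.

Lemma dsum (F : 'I_n -> R -> R) (l : 'I_n -> R) a :
  (forall i, derivable_pt_lim (F i) a (l i)) ->
  derivable_pt_lim (fun t => sumI n (fun i => F i t)) a (sumI n l).
Proof.
move=> h; rewrite /sumI.
elim: (index_enum _) => [|i r IH].
  have -> : (fun t : R => \big[Rplus/R0]_(i <- [::] | true) F i t) = fct_cte 0.
    by apply: functional_extensionality => t; rewrite big_nil.
  by rewrite big_nil; apply: derivable_pt_lim_const.
have -> : (fun t : R => \big[Rplus/R0]_(j <- i :: r | true) F j t) =
   plus_fct (F i) (fun t => \big[Rplus/R0]_(j <- r | true) F j t).
  by apply: functional_extensionality => t; rewrite big_cons.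
by rewrite big_cons; apply: derivable_pt_lim_plus.
Qed.

End Sums.
Arguments sumI_ext {n F G}.

Section Deriv.

Lemma D_ext f g x l : derivable_pt_lim f x l -> (forall t, f t = g t) -> derivable_pt_lim g x l.
Proof. by move=> h e; have <- : f = g by apply: functional_extensionality. Qed.

Lemma D_val f x l l' : derivable_pt_lim f x l -> l = l' -> derivable_pt_lim f x l'.
Proof. by move=> h <-. Qed.

Lemma D_const c x : derivable_pt_lim (fun _ => c) x 0.
Proof. exact: derivable_pt_lim_const. Qed.

Lemma D_id x : derivable_pt_lim (fun t => t) x 1.
Proof. exact: derivable_pt_lim_id. Qed.

Lemma D_add f g x lf lg : derivable_pt_lim f x lf -> derivable_pt_lim g x lg ->
  derivable_pt_lim (fun t => f t + g t) x (lf + lg).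
Proof. exact: derivable_pt_lim_plus. Qed.

Lemma D_sub f g x lf lg : derivable_pt_lim f x lf -> derivable_pt_lim g x lg ->
  derivable_pt_lim (fun t => f t - g t) x (lf - lg).
Proof. exact: derivable_pt_lim_minus. Qed.

Lemma D_opp f x lf : derivable_pt_lim f x lf ->
  derivable_pt_lim (fun t => - f t) x (- lf).
Proof. exact: derivable_pt_lim_opp. Qed.

Lemma D_mul f g x lf lg : derivable_pt_lim f x lf -> derivable_pt_lim g x lg ->
  derivable_pt_lim (fun t => f t * g t) x (lf * g x + f x * lg).
Proof. exact: derivable_pt_lim_mult. Qed.

Lemma D_div f g x lf lg : derivable_pt_lim f x lf -> derivable_pt_lim g x lg -> g x <> 0 ->
  derivable_pt_lim (fun t => f t / g t) x ((lf * g x - lg * f x) / (g x * g x)).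
Proof. exact: derivable_pt_lim_div. Qed.

Lemma D_comp f g x lf lg : derivable_pt_lim f x lf -> derivable_pt_lim g (f x) lg ->
  derivable_pt_lim (fun t => g (f t)) x (lg * lf).
Proof. exact: derivable_pt_lim_comp. Qed.

Lemma D_local f g x l e : 0 < e -> (forall t, Rabs (t - x) < e -> f t = g t) ->
  derivable_pt_lim f x l -> derivable_pt_lim g x l.
Proof.
move=> e0 hfg hf eps eps0.
case: (hf eps eps0) => d hd.
have m0 : 0 < Rmin d e by apply: Rmin_pos => //; apply: cond_pos.
exists (mkposreal _ m0) => h h0 hh /=.
have hx : g x = f x by rewrite hfg // Rminus_diag Rabs_R0.
have hxh : g (x + h) = f (x + h).
  rewrite hfg //; have -> : x + h - x = h by ring.
  apply: Rlt_le_trans hh _; apply: Rmin_r.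
rewrite hx hxh; apply: hd => //; apply: Rlt_le_trans hh _; apply: Rmin_l.
Qed.

End Deriv.
Arguments D_ext {f g x l}.
Arguments D_val {f x l l'}.
Arguments D_add {f g x lf lg}.
Arguments D_sub {f g x lf lg}.
Arguments D_opp {f x lf}.
Arguments D_mul {f g x lf lg}.
Arguments D_div {f g x lf lg}.
Arguments D_comp {f g x lf lg}.
Arguments D_local {f g x l e}.

Section Upd.
Variable n : nat.

Lemma upd_at (p : Rn n) i t : upd p i t i = t.
Proof. by rewrite /upd eqxx. Qed.

Lemma upd_ne (p : Rn n) i t j : j != i -> upd p i t j = p j.
Proof. by rewrite /upd => /negbTE ->. Qed.

Lemma upd_same (p : Rn n) i : upd p i (p i) = p.
Proof. by apply: functional_extensionality => j; rewrite /upd; case: eqP => [->|]. Qed.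

Lemma upd_upd (p : Rn n) i s t : upd (upd p i s) i t = upd p i t.
Proof. by apply: functional_extensionality => j; rewrite /upd; case: eqP. Qed.

Lemma upd_comm (p : Rn n) a b s t : a != b -> upd (upd p a s) b t = upd (upd p b t) a s.
Proof.
move=> ab; apply: functional_extensionality => j; rewrite /upd.
case: (eqVneq j b) => [->|jb] //.
by rewrite eq_sym (negbTE ab).
Qed.

Lemma pd_spec (i : 'I_n) F p : has_pd i F p ->
  derivable_pt_lim (fun t => F (upd p i t)) (p i) (pd i F p).
Proof. move=> h; rewrite /pd; exact: (epsilon_spec (inhabits R0) _ h). Qed.

Lemma pd_unique (i : 'I_n) F p l :
  derivable_pt_lim (fun t => F (upd p i t)) (p i) l -> pd i F p = l.
Proof.
move=> h; have hp : has_pd i F p by exists l.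
have h2 := @pd_spec i F p hp.
exact: (uniqueness_limite _ _ _ _ h2 h).
Qed.

Lemma pd_local (i : 'I_n) F G p e : 0 < e ->
  (forall q : Rn n, (forall j, Rabs (q j - p j) < e) -> F q = G q) ->
  pd i F p = pd i G p.
Proof.
move=> e0 h; rewrite /pd; f_equal.
have hl : forall t, Rabs (t - p i) < e -> F (upd p i t) = G (upd p i t).
  move=> t ht; apply: h => j; case: (eqVneq j i) => [->|ji].
    by rewrite upd_at.
  by rewrite upd_ne // Rminus_diag Rabs_R0.
apply: functional_extensionality => l; apply: propositional_extensionality; split.
  by apply: (D_local e0 hl).
apply: (D_local e0) => t ht; symmetry; exact: hl.
Qed.

End Upd.

Lemma eq_of_small u w : (forall eps, 0 < eps -> Rabs (u - w) < eps) -> u = w.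
Proof.
move=> h; case: (Req_dec u w) => // huw.
have hp : 0 < Rabs (u - w) by apply: Rabs_pos_lt; lra.
have := h _ hp; lra.
Qed.

Lemma abs_le01 x r : 0 <= x <= r -> Rabs x <= r.
Proof. by move=> [h1 h2]; rewrite Rabs_pos_eq. Qed.

Lemma schwarz n (Omega : Rn n -> Prop) v : openRn Omega -> smooth_on Omega v ->
  forall ks a b p, Omega p -> pd a (pd b (pdl ks v)) p = pd b (pd a (pdl ks v)) p.
Proof.
move=> hO hs ks a b p Op.
case: (eqVneq a b) => [->//|ab].
have ba : b != a by rewrite eq_sym.
set f := pdl ks v.
have hpa : forall q, Omega q -> has_pd a f q by move=> q Oq; exact: (proj2 (hs ks q Oq)).
have hpb : forall q, Omega q -> has_pd b f q by move=> q Oq; exact: (proj2 (hs ks q Oq)).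
have hpba : forall q, Omega q -> has_pd b (pd a f) q by move=> q Oq; exact: (proj2 (hs (a::ks) q Oq)).
have hpab : forall q, Omega q -> has_pd a (pd b f) q by move=> q Oq; exact: (proj2 (hs (b::ks) q Oq)).
case: (hO p Op) => e [e0 he].
apply: eq_of_small => eps eps0.
have eps2 : 0 < eps / 2 by lra.
have [d1 [d10 hd1]] := (proj1 (hs (b::a::ks) p Op)) _ eps2.
have [d2 [d20 hd2]] := (proj1 (hs (a::b::ks) p Op)) _ eps2.
rewrite /= -/f in hd1 hd2.
set h := Rmin e (Rmin d1 d2) / 2.
have hm : 0 < Rmin e (Rmin d1 d2) by apply: Rmin_pos => //; apply: Rmin_pos.
have h0 : 0 < h by rewrite /h; lra.
have he' : h < e by have := Rmin_l e (Rmin d1 d2); rewrite /h; lra.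
have hd1' : h < d1 by have := Rmin_r e (Rmin d1 d2); have := Rmin_l d1 d2; rewrite /h; lra.
have hd2' : h < d2 by have := Rmin_r e (Rmin d1 d2); have := Rmin_r d1 d2; rewrite /h; lra.
pose q s t := upd (upd p a s) b t.
have hq : forall s t, p a <= s <= p a + h -> p b <= t <= p b + h ->
    forall m, Rabs (q s t m - p m) <= h.
  move=> s t hs1 ht m; rewrite /q /upd; case: eqP => [->|_].
    by apply: abs_le01; lra.
  case: eqP => [->|_]; first by apply: abs_le01; lra.
  by rewrite Rminus_diag Rabs_R0; lra.
have Oq : forall s t, p a <= s <= p a + h -> p b <= t <= p b + h -> Omega (q s t).
  move=> s t hs1 ht; apply: he => m; have := hq s t hs1 ht m; lra.
have dqa : forall F s t, has_pd a F (q s t) ->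
    derivable_pt_lim (fun s' => F (q s' t)) s (pd a F (q s t)).
  move=> F s t hF; have := @pd_spec n a F (q s t) hF.
  have -> : q s t a = s by rewrite /q upd_ne // upd_at.
  move=> hD; apply: D_ext hD _ => u; congr F.
  by rewrite /q (upd_comm _ _ _ _ _ _ ba) upd_upd.
have dqb : forall F s t, has_pd b F (q s t) ->
    derivable_pt_lim (fun t' => F (q s t')) t (pd b F (q s t)).
  move=> F s t hF; have := @pd_spec n b F (q s t) hF.
  have -> : q s t b = t by rewrite /q upd_at.
  move=> hD; apply: D_ext hD _ => u; congr F.
  by rewrite /q upd_upd.
have hA : p a < p a + h by lra.
have hB : p b < p b + h by lra.
have iA : p a <= p a <= p a + h by lra.
have iA' : p a <= p a + h <= p a + h by lra.
have iB : p b <= p b <= p b + h by lra.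
have iB' : p b <= p b + h <= p b + h by lra.
have [c [e1 hc]] := MVT_cor2 (fun s => f (q s (p b + h)) - f (q s (p b)))
   (fun s => pd a f (q s (p b + h)) - pd a f (q s (p b))) _ _ hA
   (fun s hs1 => D_sub (dqa _ _ _ (hpa _ (Oq _ _ hs1 iB'))) (dqa _ _ _ (hpa _ (Oq _ _ hs1 iB)))).
have ic : p a <= c <= p a + h by lra.
have [d [e2 hd]] := MVT_cor2 (fun t => pd a f (q c t)) (fun t => pd b (pd a f) (q c t)) _ _ hB
   (fun t ht => dqb _ _ _ (hpba _ (Oq _ _ ic ht))).
have id : p b <= d <= p b + h by lra.
have [d' [e3 hd']] := MVT_cor2 (fun t => f (q (p a + h) t) - f (q (p a) t))
   (fun t => pd b f (q (p a + h) t) - pd b f (q (p a) t)) _ _ hB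
   (fun t ht => D_sub (dqb _ _ _ (hpb _ (Oq _ _ iA' ht))) (dqb _ _ _ (hpb _ (Oq _ _ iA ht)))).
have id' : p b <= d' <= p b + h by lra.
have [c' [e4 hc']] := MVT_cor2 (fun s => pd b f (q s d')) (fun s => pd a (pd b f) (q s d')) _ _ hA
   (fun s hs1 => dqa _ _ _ (hpab _ (Oq _ _ hs1 id'))).
have ic' : p a <= c' <= p a + h by lra.
set X := pd b (pd a f) (q c d) in e2.
set Y := pd a (pd b f) (q c' d') in e4.
have hXY : X = Y.
  have hh : p a + h - p a = h by ring.
  have hh' : p b + h - p b = h by ring.
  rewrite hh in e1 e4; rewrite hh' in e2 e3.
  have : (X - Y) * (h * h) = 0 by nra.
  move/Rmult_integral => [|]; first lra.
  move=> hh0; have : 0 < h * h by nra.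
  lra.
have c1 : Rabs (X - pd b (pd a f) p) < eps / 2.
  apply: hd1 => m; have := hq c d ic id m; lra.
have c2 : Rabs (Y - pd a (pd b f) p) < eps / 2.
  apply: hd2 => m; have := hq c' d' ic' id' m; lra.
move: c1 c2; rewrite hXY => /Rabs_def2 [c1 c1'] /Rabs_def2 [c2 c2'].
apply: Rabs_def1; lra.
Qed.

Definition SS {n} (z : Rn n) := sumI n (fun m => z m ^ 2).
Definition Nz {n} (z : Rn n) := sqrt (SS z).
Definition Hf {n} (i : 'I_n) (z : Rn n) := z i / Nz z.
Definition DH {n} (i k : 'I_n) (z : Rn n) := (del i k - Hf i z * Hf k z) / Nz z.
Definition DDH {n} (i k j : 'I_n) (z : Rn n) :=
  (-(DH i j z * Hf k z + Hf i z * DH k j z)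
   - (del i k - Hf i z * Hf k z) * Hf j z / Nz z) / Nz z.

Section HDeriv.
Variable n : nat.
Implicit Types z : Rn n.

Lemma line_SS z j s : SS (upd z j s) = SS z - z j ^ 2 + s ^ 2.
Proof.
rewrite /SS /sumI (bigD1 j) // [in RHS](bigD1 j) // upd_at.
have -> : \big[Rplus/R0]_(i < n | i != j) upd z j s i ^ 2 =
          \big[Rplus/R0]_(i < n | i != j) z i ^ 2.
  by apply: eq_bigr => i hi; rewrite upd_ne.
set S := \big[Rplus/R0]_(i < n | i != j) z i ^ 2.
rewrite /=; ring.
Qed.

Lemma Nz_pos z : 0 < SS z -> 0 < Nz z.
Proof. by move=> h; apply: sqrt_lt_R0. Qed.

Lemma D_SS z j : derivable_pt_lim (fun s => SS (upd z j s)) (z j) (2 * z j).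
Proof.
apply: (D_ext (f := fun s => SS z - z j ^ 2 + s ^ 2)); last by move=> s; rewrite line_SS.
apply: D_val; first apply: (D_add (D_const _ _) (derivable_pt_lim_pow _ 2)).
rewrite /=; ring.
Qed.

Lemma D_Nz z j : 0 < SS z -> derivable_pt_lim (fun s => Nz (upd z j s)) (z j) (Hf j z).
Proof.
move=> hp; rewrite /Nz.
apply: D_val; first apply: D_comp (D_SS z j) _.
  rewrite upd_same; exact: derivable_pt_lim_sqrt.
rewrite /Hf /Nz; have := Nz_pos _ hp; rewrite /Nz => h; field; lra.
Qed.

Lemma D_coord z j i : derivable_pt_lim (fun s => upd z j s i) (z j) (del i j).
Proof.
rewrite /del /upd; case: eqP => _; [exact: D_id| exact: D_const].
Qed.

Lemma D_Hf z i j : 0 < SS z -> derivable_pt_lim (fun s => Hf i (upd z j s)) (z j) (DH i j z).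
Proof.
move=> hp; rewrite /Hf.
have hN := Nz_pos _ hp.
apply: D_val; first apply: D_div (D_coord z j i) (D_Nz _ j hp) _.
  by rewrite /= ?(upd_same _ z j); lra.
rewrite /= ?(upd_same _ z j) /DH /Hf; field; lra.
Qed.

Lemma D_DH z i k j : 0 < SS z ->
  derivable_pt_lim (fun s => DH i k (upd z j s)) (z j) (DDH i k j z).
Proof.
move=> hp; rewrite {1}/DH.
have hN := Nz_pos _ hp.
apply: D_val; first apply: D_div (D_sub (D_const _ _) (D_mul (D_Hf _ i j hp) (D_Hf _ k j hp))) (D_Nz _ j hp) _.
  by rewrite /= ?(upd_same _ z j); lra.
rewrite /= ?(upd_same _ z j) /DDH; field; lra.
Qed.

End HDeriv.

Section HSums.
Variable n : nat.
Implicit Types z : Rn n.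

Lemma sumI_lin3 a b c (F G K : 'I_n -> R) :
  sumI n (fun k => a * F k + b * G k + c * K k) = a * sumI n F + b * sumI n G + c * sumI n K.
Proof. by rewrite !sumI_add !sumI_scal. Qed.

Lemma sumI_lin2 a b (F G : 'I_n -> R) :
  sumI n (fun k => a * F k + b * G k) = a * sumI n F + b * sumI n G.
Proof. by rewrite !sumI_add !sumI_scal. Qed.

Lemma sumH2 z : 0 < SS z -> sumI n (fun j => Hf j z * Hf j z) = 1.
Proof.
move=> hp; have hN := Nz_pos _ _ hp.
have hNN : Nz z * Nz z = SS z by rewrite /Nz sqrt_sqrt //; lra.
rewrite (sumI_ext (G := fun j => / (Nz z * Nz z) * (z j ^ 2))); last first.
  by move=> j; rewrite /Hf; field; lra.
rewrite -sumI_scal -/(SS z) hNN; field; lra.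
Qed.

Lemma DH_sym z i j : DH i j z = DH j i z.
Proof. by rewrite /DH /del eq_sym; congr ((_ - _) / _); ring. Qed.

Lemma sumHDH z i : 0 < SS z -> sumI n (fun j => Hf j z * DH i j z) = 0.
Proof.
move=> hp; have hN := Nz_pos _ _ hp.
rewrite (sumI_ext (G := fun j => / Nz z * (del i j * Hf j z) + (- (Hf i z / Nz z)) * (Hf j z * Hf j z))); last first.
  by move=> j; rewrite /DH; field; lra.
rewrite sumI_lin2 sumI_del sumH2 //; field; lra.
Qed.

Lemma sumHHDDH z i : 0 < SS z ->
  sumI n (fun j => sumI n (fun k => Hf j z * Hf k z * DDH i k j z)) = 0.
Proof.
move=> hp; have hN := Nz_pos _ _ hp.
rewrite (sumI_ext (G := fun j => (- / Nz z) * (Hf j z * DH i j z))).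
  by rewrite -sumI_scal sumHDH //; ring.
move=> j.
set c1 := - Hf j z * DH i j z / Nz z + Hf i z * Hf j z * Hf j z / (Nz z * Nz z).
set c2 := - Hf i z * Hf j z / Nz z.
set c3 := - Hf j z * Hf j z / (Nz z * Nz z).
rewrite (sumI_ext (G := fun k => c1 * (Hf k z * Hf k z) + c2 * (Hf k z * DH j k z) + c3 * (del i k * Hf k z))); last first.
  move=> k; rewrite /DDH (DH_sym z k j) /c1 /c2 /c3; field; lra.
rewrite sumI_lin3 sumH2 // sumHDH // sumI_del /c1 /c3; field; lra.
Qed.

End HSums.

Arguments upd_at {n}. Arguments upd_ne {n}. Arguments upd_same {n}.
Arguments upd_upd {n}. Arguments upd_comm {n}.
Arguments pd_spec {n i F p}. Arguments pd_unique {n i F p l}.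
Arguments pd_local {n i F G p e}.
Arguments Nz_pos {n z}. Arguments D_Nz {n z}. Arguments D_Hf {n z}. Arguments D_DH {n z}.
Arguments sumH2 {n z}. Arguments sumHDH {n z}. Arguments sumHHDDH {n z}.

Definition zz {n} (x y : Rn n) : Rn n := fun m => y m - x m.

Section Lines.
Variable n : nat.

Lemma zz_upd_y (x y : Rn n) j t : zz x (upd y j t) = upd (zz x y) j (t - x j).
Proof.
apply: functional_extensionality => m; rewrite /zz /upd.
by case: eqP => [->|].
Qed.

Lemma zz_upd_x (x y : Rn n) j t : zz (upd x j t) y = upd (zz x y) j (y j - t).
Proof.
apply: functional_extensionality => m; rewrite /zz /upd.
by case: eqP => [->|].
Qed.

Lemma D_zy (Phi : Rn n -> R) x y j d :
  derivable_pt_lim (fun s => Phi (upd (zz x y) j s)) (zz x y j) d ->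
  derivable_pt_lim (fun t => Phi (zz x (upd y j t))) (y j) d.
Proof.
move=> h.
have h2 := D_comp (D_sub (D_id (y j)) (D_const (x j) (y j))) h.
apply: (D_ext (f := fun t => Phi (upd (zz x y) j (t - x j)))); last first.
  by move=> t; rewrite zz_upd_y.
by apply: D_val h2 _; ring.
Qed.

Lemma D_zx (Phi : Rn n -> R) x y j d :
  derivable_pt_lim (fun s => Phi (upd (zz x y) j s)) (zz x y j) d ->
  derivable_pt_lim (fun t => Phi (zz (upd x j t) y)) (x j) (- d).
Proof.
move=> h.
have h2 := D_comp (D_sub (D_const (y j) (x j)) (D_id (x j))) h.
apply: (D_ext (f := fun t => Phi (upd (zz x y) j (y j - t)))); last first.
  by move=> t; rewrite zz_upd_x.
by apply: D_val h2 _; ring.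
Qed.

End Lines.
Arguments D_zy {n Phi x y j d}. Arguments D_zx {n Phi x y j d}.

Section Main.
Variable n : nat.
Variable Omega : Rn n -> Prop.
Variable v : Rn n -> R.
Hypothesis hO : openRn Omega.
Hypothesis hs : smooth_on Omega v.

Definition Good (x y : Rn n) := Omega x /\ Omega y /\ 0 < SS (zz x y).

Lemma hpd1 {p} i k : Omega p -> has_pd k (pd i v) p.
Proof. by move=> Op; exact: (proj2 (hs [:: i] p Op)). Qed.

Lemma hpd2 {p} i k j : Omega p -> has_pd j (pd k (pd i v)) p.
Proof. by move=> Op; exact: (proj2 (hs [:: k; i] p Op)). Qed.

Definition EE k x y := sumI n (fun i => pd k (pd i v) y * Hf i (zz x y)
   + (pd i v y - pd i v x) * DH i k (zz x y)).
Definition FF k x y := sumI n (fun i => - pd k (pd i v) x * Hf i (zz x y)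
   - (pd i v y - pd i v x) * DH i k (zz x y)).

Lemma gdd_eq (u : Rn n -> R) x y :
  grad_diff_dot u x y = sumI n (fun i => (pd i u y - pd i u x) * Hf i (zz x y)).
Proof. by []. Qed.

Lemma E_formula x y k : Good x y -> pd k (grad_diff_dot v x) y = EE k x y.
Proof.
move=> [Ox [Oy hp]]; apply: pd_unique.
apply: (D_ext (f := fun t => sumI n (fun i => (pd i v (upd y k t) - pd i v x) * Hf i (zz x (upd y k t))))); last by [].
apply: D_val; first apply: dsum => i.
  apply: D_mul (D_sub (pd_spec (hpd1 i k Oy)) (D_const _ _)) (D_zy (D_Hf i k hp)).
rewrite /EE; apply: sumI_ext => i /=; rewrite (upd_same y k); ring.
Qed.

Lemma F_formula x y k : Good x y -> pd k (fun x' => grad_diff_dot v x' y) x = FF k x y.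
Proof.
move=> [Ox [Oy hp]]; apply: pd_unique.
apply: (D_ext (f := fun t => sumI n (fun i => (pd i v y - pd i v (upd x k t)) * Hf i (zz (upd x k t) y)))); last by [].
apply: D_val; first apply: dsum => i.
  apply: D_mul (D_sub (D_const _ _) (pd_spec (hpd1 i k Ox))) (D_zx (D_Hf i k hp)).
rewrite /FF; apply: sumI_ext => i /=; rewrite (upd_same x k); ring.
Qed.

Definition VEy j k x y := sumI n (fun i => pd j (pd k (pd i v)) y * Hf i (zz x y)
  + pd k (pd i v) y * DH i j (zz x y) + pd j (pd i v) y * DH i k (zz x y)
  + (pd i v y - pd i v x) * DDH i k j (zz x y)).
Definition VFx j k x y := sumI n (fun i => - pd j (pd k (pd i v)) x * Hf i (zz x y)
  + pd k (pd i v) x * DH i j (zz x y) + pd j (pd i v) x * DH i k (zz x y)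
  + (pd i v y - pd i v x) * DDH i k j (zz x y)).
Definition VEx j k x y := sumI n (fun i => - pd k (pd i v) y * DH i j (zz x y)
  - pd j (pd i v) x * DH i k (zz x y)
  - (pd i v y - pd i v x) * DDH i k j (zz x y)).

Lemma dEy x y j k : Good x y ->
  derivable_pt_lim (fun t => EE k x (upd y j t)) (y j) (VEy j k x y).
Proof.
move=> [Ox [Oy hp]].
apply: D_val; first apply: dsum => i.
  apply: D_add.
    apply: D_mul (pd_spec (hpd2 i k j Oy)) (D_zy (D_Hf i j hp)).
  apply: D_mul (D_sub (pd_spec (hpd1 i j Oy)) (D_const _ _)) (D_zy (D_DH i k j hp)).
rewrite /VEy; apply: sumI_ext => i /=; rewrite (upd_same y j); ring.
Qed.

Lemma dEx x y j k : Good x y ->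
  derivable_pt_lim (fun t => EE k (upd x j t) y) (x j) (VEx j k x y).
Proof.
move=> [Ox [Oy hp]].
apply: D_val; first apply: dsum => i.
  apply: D_add.
    apply: D_mul (D_const _ _) (D_zx (D_Hf i j hp)).
  apply: D_mul (D_sub (D_const _ _) (pd_spec (hpd1 i j Ox))) (D_zx (D_DH i k j hp)).
rewrite /VEx; apply: sumI_ext => i /=; rewrite (upd_same x j); ring.
Qed.

Lemma dFx x y j k : Good x y ->
  derivable_pt_lim (fun t => FF k (upd x j t) y) (x j) (VFx j k x y).
Proof.
move=> [Ox [Oy hp]].
apply: D_val; first apply: dsum => i.
  apply: D_sub.
    apply: D_mul (D_opp (pd_spec (hpd2 i k j Ox))) (D_zx (D_Hf i j hp)).
  apply: D_mul (D_sub (D_const _ _) (pd_spec (hpd1 i j Ox))) (D_zx (D_DH i k j hp)).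
rewrite /VFx; apply: sumI_ext => i /=; rewrite (upd_same x j); ring.
Qed.


Lemma sumI_zero' (F : 'I_n -> R) : (forall i, F i = 0) -> sumI n F = 0.
Proof.
move=> h; rewrite (sumI_ext (G := fun i => 0 * 1)); last by move=> i; rewrite h; ring.
by rewrite -sumI_scal Rmult_0_l.
Qed.

Lemma pos_SS (z : Rn n) m0 : z m0 <> 0 -> 0 < SS z.
Proof.
move=> h.
have h0 : forall m, 0 <= z m ^ 2 by move=> m; apply: pow2_ge_0.
have := sumI_ge_term _ _ m0 h0.
have := Rsqr_pos_lt _ h; rewrite /Rsqr /SS /= Rmult_1_r; lra.
Qed.

Lemma SS_pos_of_ne (x y : Rn n) : x <> y -> 0 < SS (zz x y).
Proof.
move=> hxy; case: (classic (exists m, zz x y m <> 0)) => [[m hm]|hn].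
  exact: pos_SS hm.
exfalso; apply: hxy; apply: functional_extensionality => m.
have : zz x y m = 0 by apply: NNPP => hm; apply: hn; exists m.
rewrite /zz; lra.
Qed.

Lemma good_nbhd x y : Good x y -> exists e, 0 < e /\
  (forall x', (forall m, Rabs (x' m - x m) < e) -> Good x' y) /\
  (forall y', (forall m, Rabs (y' m - y m) < e) -> Good x y').
Proof.
move=> [Ox [Oy hp]].
case: (hO x Ox) => ex [ex0 hex]; case: (hO y Oy) => ey [ey0 hey].
have [m0 hm0] : exists m, zz x y m <> 0.
  apply: NNPP => hn; move: hp.
  rewrite /SS (sumI_ext (G := fun m => 0 * 1)); last first.
    move=> m; have : zz x y m = 0 by apply: NNPP => hm; apply: hn; exists m.
    by move=> ->; ring.
  by rewrite -sumI_scal Rmult_0_l; lra.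
have c0 : 0 < Rabs (zz x y m0) by apply: Rabs_pos_lt.
set c := Rabs (zz x y m0) in c0.
have hmin : 0 < Rmin (Rmin ex ey) (c / 2) by repeat apply: Rmin_pos => //; lra.
exists (Rmin (Rmin ex ey) (c / 2)); split => //.
have l1 := Rmin_l (Rmin ex ey) (c / 2); have l2 := Rmin_r (Rmin ex ey) (c / 2).
have l3 := Rmin_l ex ey; have l4 := Rmin_r ex ey.
split.
  move=> x' hx'; split; [|split] => //.
    by apply: hex => m; have := hx' m; lra.
  apply: (pos_SS _ m0) => h0.
  have e1 : zz x y m0 = x' m0 - x m0 by move: h0; rewrite /zz; lra.
  have := hx' m0; rewrite -e1 -/c; lra.
move=> y' hy'; split; [|split] => //.
  by apply: hey => m; have := hy' m; lra.
apply: (pos_SS _ m0) => h0.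
have e1 : y' m0 - y m0 = - zz x y m0 by move: h0; rewrite /zz; lra.
have := hy' m0; rewrite e1 Rabs_Ropp -/c; lra.
Qed.

Lemma lap_pd p i : Omega p -> pd i (lap v) p = sumI n (fun k => pd k (pd k (pd i v)) p).
Proof.
move=> Op; apply: pd_unique.
apply: (D_ext (f := fun t => sumI n (fun k => pd k (pd k v) (upd p i t)))); last by [].
apply: D_val; first apply: dsum => k; first exact: pd_spec (hpd2 k k i Op).
apply: sumI_ext => k.
have s1 := schwarz _ _ _ hO hs [:: k] i k p Op; rewrite /= in s1; rewrite s1.
case: (hO p Op) => e [e0 he].
apply: (pd_local e0) => q hq.
exact: (schwarz _ _ _ hO hs [::] i k q (he q hq)).
Qed.

Lemma main_eq (x y : Rn n) : Omega x -> Omega y -> x <> y ->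
  Lop (grad_diff_dot v) x y = grad_diff_dot (lap v) x y.
Proof.
move=> Ox Oy hxy.
have G : Good x y by split; [|split] => //; apply: SS_pos_of_ne.
case: (good_nbhd _ _ G) => e [e0 [hx hy]].
set W := grad_diff_dot v.
set z := zz x y.
have H1 : forall k, dx k (dx k W) x y = VFx k k x y.
  move=> k; rewrite /dx.
  rewrite (pd_local (G := fun x' => FF k x' y) e0); last first.
    by move=> q hq; apply: F_formula; apply: hx.
  apply: pd_unique; exact: dFx.
have H2 : forall k, dy k (dy k W) x y = VEy k k x y.
  move=> k; rewrite /dy /=.
  rewrite (pd_local (G := fun y' => EE k x y') e0); last first.
    by move=> q hq; apply: E_formula; apply: hy.
  apply: pd_unique; exact: dEy.
have H3 : forall i j, dx i (dy j W) x y = VEx i j x y.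
  move=> i j; rewrite /dx /dy /=.
  rewrite (pd_local (G := fun x' => EE j x' y) e0); last first.
    by move=> q hq; apply: E_formula; apply: hx.
  apply: pd_unique; exact: dEx.
have M0 : sumI n (fun i => sumI n (fun j => Xc i x y * Xc j x y * dx i (dy j W) x y)) = 0.
  rewrite (sumI_ext (G := fun i => sumI n (fun m => sumI n (fun j =>
     Hf i z * Hf j z * (- pd j (pd m v) y * DH m i z - pd i (pd m v) x * DH m j z
        - (pd m v y - pd m v x) * DDH m j i z))))); last first.
    move=> i; rewrite -sumI_swap; apply: sumI_ext => j.
    by rewrite H3 /VEx sumI_scal.
  rewrite sumI_swap; apply: sumI_zero' => m.
  rewrite (sumI_ext (G := fun i => (- (Hf i z * DH m i z)) * sumI n (fun j => Hf j z * pd j (pd m v) y)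
     + (- (Hf i z * pd i (pd m v) x)) * sumI n (fun j => Hf j z * DH m j z)
     + (- (pd m v y - pd m v x)) * sumI n (fun j => Hf i z * Hf j z * DDH m j i z))); last first.
    by move=> i; rewrite -sumI_lin3; apply: sumI_ext => j; ring.
  rewrite (sumHDH m (proj2 (proj2 G))).
  rewrite (sumI_ext (G := fun i => (- sumI n (fun j => Hf j z * pd j (pd m v) y)) * (Hf i z * DH m i z)
     + (- (pd m v y - pd m v x)) * sumI n (fun j => Hf i z * Hf j z * DDH m j i z))); last first.
    by move=> i; ring.
  rewrite sumI_lin2 (sumHDH m (proj2 (proj2 G))) (sumHHDDH m (proj2 (proj2 G))); ring.
have B : sumI n (fun k => dx k (dx k W) x y) + sumI n (fun k => dy k (dy k W) x y)
    + 2 * sumI n (fun k => dx k (dy k W) x y)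
    = sumI n (fun k => sumI n (fun i => (pd k (pd k (pd i v)) y - pd k (pd k (pd i v)) x) * Hf i z)).
  rewrite (sumI_ext H1) (sumI_ext H2) (sumI_ext (fun k => H3 k k)).
  rewrite sumI_scal -!sumI_add; apply: sumI_ext => k.
  rewrite /VFx /VEy /VEx sumI_scal -!sumI_add; apply: sumI_ext => i; rewrite /z; ring.
rewrite /Lop -/W B M0 gdd_eq.
rewrite [in RHS](sumI_ext (G := fun i => (sumI n (fun k => pd k (pd k (pd i v)) y)
    - sumI n (fun k => pd k (pd k (pd i v)) x)) * Hf i z)); last first.
  by move=> i; rewrite (lap_pd _ i Oy) (lap_pd _ i Ox).
rewrite sumI_swap.
have -> : forall r : R, r - 4 * 0 = r by move=> r; ring.
apply: sumI_ext => i.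
rewrite (sumI_ext (G := fun k => Hf i z * pd k (pd k (pd i v)) y + (- Hf i z) * pd k (pd k (pd i v)) x)); last first.
  by move=> k; ring.
rewrite sumI_lin2; ring.
Qed.

End Main.

Theorem lemma2p2 (n : nat) (Omega : Rn n -> Prop) (v : Rn n -> R) :
  openRn Omega -> smooth_on Omega v ->
  forall x y : Rn n, Omega x -> Omega y -> x <> y ->
  Lop (grad_diff_dot v) x y = grad_diff_dot (lap v) x y.
Proof. move=> hO hs x y Ox Oy hxy; exact: (@main_eq n Omega v hO hs x y Ox Oy hxy). Qed.
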